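(* Let $r>c>\nu$ and $0<t<r-\nu$, set $R=(r-c)/(r-\nu)$, $\gamma=t/(r-\nu)$, fix $\rho\in[0,1)$, and for each integer $n\ge1$ let $L_n=\sqrt{n/(1+(n-1)\rho)}$ and let $Y_n$ be the unique real solution of $$R=\gamma\,\Phi(Y_n)+(1-\gamma)\,\Phi(L_nY_n),$$ with $\Phi$ the standard normal cdf. If $R>1/2$ (over-mean problem), then $Y_1>Y_2>\dots>Y_n>\dots>0$. If $R<1/2$ (under-mean problem), then $Y_1<Y_2<\dots<Y_n<\dots<0$.
   Context: $Y_n$ is the standardized optimal common order quantity $(X_n-\mu)/\sigma$ of a transshipment coalition of $n$ identical newsvendors (selling price $r$, cost $c$, salvage value $\nu$, unit transportation cost $t$) facing jointly normal demands with mean $\mu$, standard deviation $\sigma$ and common pairwise correlation $\rho$. The right-hand side of the defining equation is strictly increasing in $Y_n$ from $0$ to $1$, so $Y_n$ is well defined. *)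

(* Defs.v *)
From Stdlib Require Import Reals Lra.
Open Scope R_scope.

Definition normal_density (x : R) : R := / sqrt (2 * PI) * exp (- (x ^ 2) / 2).

Lemma normal_density_continuity : continuity normal_density.
Proof.
  unfold normal_density.
  apply continuity_mult; [apply continuity_const; intros ? ?; reflexivity |].
  apply (continuity_comp (fun x => - (x ^ 2) / 2) exp).
  - unfold Rdiv. apply continuity_mult.
    + apply continuity_opp. apply derivable_continuous. apply derivable_pow.
    + apply continuity_const; intros ? ?; reflexivity.
  - apply derivable_continuous. apply derivable_exp.
Qed.

Lemma normal_density_integrable (a b : R) : Riemann_integrable normal_density a b.
Proof.
  destruct (Rle_dec a b) as [H | H].
  - apply continuity_implies_RiemannInt; [exact H |].
    intros x _; apply normal_density_continuity.
  - apply RiemannInt_P1. apply continuity_implies_RiemannInt; [lra |].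
    intros x _; apply normal_density_continuity.
Qed.

Definition Phi (x : R) : R := / 2 + RiemannInt (normal_density_integrable 0 x).

Definition crit_ratio (r c nu : R) : R := (r - c) / (r - nu).
Definition gamma_ratio (r nu t : R) : R := t / (r - nu).

Definition L_n (rho : R) (n : nat) : R := sqrt (INR n / (1 + (INR n - 1) * rho)).

(* Main.v *)
Require Import Defs.
From Stdlib Require Import Reals.
Open Scope R_scope.
From Stdlib Require Import Lra Psatz.

Lemma Phi_lt x y : x < y -> Phi x < Phi y.
Proof.
  intros Hxy. unfold Phi.
  rewrite <- (RiemannInt_P26 (normal_density_integrable 0 x) (normal_density_integrable x y) (normal_density_integrable 0 y)).
  set (m := / sqrt (2 * PI) * exp (- (x ^ 2 + y ^ 2) / 2)).
  assert (Hm : 0 < m).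
  { unfold m. apply Rmult_lt_0_compat; [|apply exp_pos].
    apply Rinv_0_lt_compat, sqrt_lt_R0. pose proof PI_RGT_0; lra. }
  assert (Hc : Riemann_integrable (fct_cte m) x y).
  { apply continuity_implies_RiemannInt; [lra|]. intros z _. apply continuity_const. intros ? ?; reflexivity. }
  assert (H := RiemannInt_P19 Hc (normal_density_integrable x y) (Rlt_le _ _ Hxy)).
  rewrite RiemannInt_P15 in H.
  assert (0 < m * (y - x)) by (apply Rmult_lt_0_compat; lra).
  enough (RiemannInt Hc <= RiemannInt (normal_density_integrable x y)) by
    (rewrite RiemannInt_P15 in *; lra).
  apply RiemannInt_P19; [lra|].
  intros z Hz. unfold fct_cte, m, normal_density.
  apply Rmult_le_compat_l.
  { left. apply Rinv_0_lt_compat, sqrt_lt_R0. pose proof PI_RGT_0; lra. }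
  assert (z ^ 2 <= x ^ 2 + y ^ 2).
  { destruct (Rle_dec 0 z); nra. }
  destruct (Rle_lt_or_eq_dec (- (x ^ 2 + y ^ 2) / 2) (- z ^ 2 / 2)) as [h|h]; [lra| |].
  - left; apply exp_increasing; exact h.
  - rewrite h; lra.
Qed.

Lemma Phi0 : Phi 0 = / 2.
Proof. unfold Phi. rewrite RiemannInt_P9. lra. Qed.

Lemma L_pos rho n : 0 <= rho -> rho < 1 -> (1 <= n)%nat -> 0 < L_n rho n.
Proof.
  intros h0 h1 hn. unfold L_n. apply sqrt_lt_R0.
  apply le_INR in hn. simpl in hn.
  apply Rdiv_lt_0_compat; nra.
Qed.

Lemma L_lt rho n : 0 <= rho -> rho < 1 -> (1 <= n)%nat -> L_n rho n < L_n rho (S n).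
Proof.
  intros h0 h1 hn. unfold L_n. apply sqrt_lt_1.
  - apply le_INR in hn. simpl in hn. left; apply Rdiv_lt_0_compat; nra.
  - apply le_INR in hn. simpl in hn. rewrite S_INR. left; apply Rdiv_lt_0_compat; nra.
  - apply le_INR in hn. simpl in hn. rewrite S_INR.
    set (a := INR n) in *.
    assert (0 < 1 + (a - 1) * rho) by nra.
    assert (0 < 1 + (a + 1 - 1) * rho) by nra.
    apply (Rmult_lt_reg_r ((1 + (a - 1) * rho) * (1 + (a + 1 - 1) * rho))); [nra|].
    unfold Rdiv. field_simplify; try lra; nra.
Qed.

Theorem theorem3 (r c nu t rho : R) (Y : nat -> R)
  (Hcr : c < r) (Hnuc : nu < c) (Ht0 : 0 < t) (Ht1 : t < r - nu)
  (Hrho0 : 0 <= rho) (Hrho1 : rho < 1)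
  (HY : forall n : nat, (1 <= n)%nat ->
        crit_ratio r c nu =
        gamma_ratio r nu t * Phi (Y n)
        + (1 - gamma_ratio r nu t) * Phi (L_n rho n * Y n)) :
  (crit_ratio r c nu > 1 / 2 ->
     (forall n : nat, (1 <= n)%nat -> Y (S n) < Y n) /\
     (forall n : nat, (1 <= n)%nat -> 0 < Y n)) /\
  (crit_ratio r c nu < 1 / 2 ->
     (forall n : nat, (1 <= n)%nat -> Y n < Y (S n)) /\
     (forall n : nat, (1 <= n)%nat -> Y n < 0)).
Proof.
  set (g := gamma_ratio r nu t) in *.
  set (Rc := crit_ratio r c nu) in *.
  assert (Hg0 : 0 < g) by (unfold g, gamma_ratio; apply Rdiv_lt_0_compat; lra).
  assert (Hg1 : g < 1).
  { unfold g, gamma_ratio. apply (Rmult_lt_reg_r (r - nu)); [lra|].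
    unfold Rdiv; rewrite Rmult_assoc, Rinv_l; lra. }
  set (F := fun n y => g * Phi y + (1 - g) * Phi (L_n rho n * y)).
  assert (Fs : forall n y y', (1 <= n)%nat -> y < y' -> F n y < F n y').
  { intros n y y' hn h. unfold F.
    pose proof (Phi_lt _ _ h).
    pose proof (L_pos rho n Hrho0 Hrho1 hn).
    assert (Phi (L_n rho n * y) < Phi (L_n rho n * y')) by (apply Phi_lt; nra).
    nra. }
  assert (F0 : forall n, F n 0 = / 2) by (intros; unfold F; rewrite Rmult_0_r, Phi0; lra).
  assert (HF : forall n, (1 <= n)%nat -> F n (Y n) = Rc) by (intros n hn; unfold F; symmetry; apply HY; auto).
  split; intros HR.
  - assert (pos : forall n, (1 <= n)%nat -> 0 < Y n).
    { intros n hn. destruct (Rle_lt_dec (Y n) 0) as [h|h]; auto.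
      destruct h as [h|h].
      + pose proof (Fs n _ _ hn h). rewrite F0, HF in H; auto. lra.
      + pose proof (HF n hn). rewrite h, F0 in H. lra. }
    split; auto. intros n hn.
    assert (hn' : (1 <= S n)%nat) by lia.
    destruct (Rlt_le_dec (Y (S n)) (Y n)) as [h|h]; auto. exfalso.
    assert (F (S n) (Y n) <= F (S n) (Y (S n))).
    { destruct h as [h|h]; [left; apply Fs; auto| rewrite h; lra]. }
    assert (F n (Y n) < F (S n) (Y n)).
    { unfold F. pose proof (L_lt rho n Hrho0 Hrho1 hn). pose proof (pos n hn).
      assert (Phi (L_n rho n * Y n) < Phi (L_n rho (S n) * Y n)) by (apply Phi_lt; nra).
      nra. }
    rewrite HF in *; auto. lra.
  - assert (neg : forall n, (1 <= n)%nat -> Y n < 0).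
    { intros n hn. destruct (Rlt_le_dec (Y n) 0) as [h|h]; auto.
      destruct h as [h|h].
      + pose proof (Fs n _ _ hn h). rewrite F0, HF in H; auto. lra.
      + pose proof (HF n hn). rewrite <- h, F0 in H. lra. }
    split; auto. intros n hn.
    assert (hn' : (1 <= S n)%nat) by lia.
    destruct (Rlt_le_dec (Y n) (Y (S n))) as [h|h]; auto. exfalso.
    assert (F (S n) (Y (S n)) <= F (S n) (Y n)).
    { destruct h as [h|h]; [left; apply Fs; auto| rewrite h; lra]. }
    assert (F (S n) (Y n) < F n (Y n)).
    { unfold F. pose proof (L_lt rho n Hrho0 Hrho1 hn). pose proof (neg n hn).
      assert (Phi (L_n rho (S n) * Y n) < Phi (L_n rho n * Y n)) by (apply Phi_lt; nra).
      nra. }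
    rewrite HF in *; auto. lra.
Qed.
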